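(* For every semistandard hook-valued tableau $T$, the tableau $\mathcal{V}_b(T)$ obtained by applying the uncrowding bumping to $T$ is again a semistandard hook-valued tableau.
   Context: French notation: row $1$ is the bottom row, rows are numbered upward, columns from left to right; cell $(r,c)$ lies in row $r$ and column $c$. A semistandard tableau of hook shape $U$ consists of a hook entry $x$ (the corner box), a leg $\ell_1<\dots<\ell_p$ stacked above $x$ with $x<\ell_1$, and an arm $a_1\le\dots\le a_q$ to the right of $x$ with $x\le a_1$ ($p,q\ge 0$, positive integer entries); write $\mathsf H(U)=x$, $\mathsf L(U)=(\ell_1,\dots,\ell_p)$, $\mathsf L^+(U)=(x,\ell_1,\dots,\ell_p)$ (extended leg), $\mathsf A(U)=(a_1,\dots,a_q)$. A (semistandard) hook-valued tableau (HVT) of partition shape $\lambda$ is a filling of the cells of the Young diagram of $\lambda$ by such hook tableaux such that $\max(A)\le\min(B)$ whenever the cell containing $A$ is in the same row and left of the cell containing $B$, and $\max(A)<\min(C)$ whenever the cell containing $A$ is in the same column and below the cell containing $C$. For a cell $(r,c)$ of $T$ write $\mathsf H_T(r,c),\mathsf L_T(r,c),\mathsf L^+_T(r,c),\mathsf A_T(r,c)$. The arm excess of $T$ is the total number of arm entries over all cells. Uncrowding bumping $\mathcal V_b$: if $T$ has arm excess $0$, $\mathcal V_b(T)=T$. Otherwise let $c$ be the largest index of a column containing a cell with nonempty arm; among the cells of column $c$ with nonempty arm let $(r,c)$ be the one whose arm contains the largest value (the topmost such cell). Let $a$ be the largest (rightmost) arm entry of $(r,c)$, $\ell$ the largest leg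 entry of $(r,c)$, and let $(a,\ell]\cap\mathsf L_T(r,c)$ denote the set of leg entries $x$ of $(r,c)$ with $a<x\le \ell$ (empty if the leg is empty). In column $c+1$ find the smallest entry (among all entries of all cells of column $c+1$) that is $\ge a$. If none exists, attach a new empty cell on top of column $c+1$, let $\tilde r$ be its row and let $k$ be the empty character; otherwise let $k$ be this entry and $(\tilde r,c+1)$ the cell containing it. (a) If $\tilde r\ne r$: remove $a$ from $\mathsf A_T(r,c)$, put $a$ in the position of $k$ in cell $(\tilde r,c+1)$ (if the cell is new, $a$ becomes its hook entry), and append $k$ (if nonempty) to the arm of $(\tilde r,c+1)$. (b) If $\tilde r=r$: remove the entries $(a,\ell]\cap\mathsf L_T(r,c)$ from the leg of $(r,c)$ and remove $a$ from the arm of $(r,c)$, insert these leg entries into the leg of $(r,c+1)$, replace the hook entry of $(r,c+1)$ by $a$, and append $k$ (if nonempty) to the arm of $(r,c+1)$. The resulting tableau is $\mathcal V_b(T)$. *)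

(* Defs.v *)
(* French notation, 1-indexed rows/columns. *)
From mathcomp Require Import all_boot.
Set Implicit Arguments. Unset Strict Implicit. Unset Printing Implicit Defensive.

(* A hook tableau U = (x, leg, arm): hook (corner) entry x, leg l_1..l_p
   (bottom to top), arm a_1..a_q (left to right). *)
Definition hook := (nat * seq nat * seq nat)%type.
Definition hH (U : hook) : nat := U.1.1.
Definition hL (U : hook) : seq nat := U.1.2.
Definition hA (U : hook) : seq nat := U.2.
Definition hentries (U : hook) : seq nat := hH U :: hL U ++ hA U.
Definition hmin (U : hook) : nat := foldr minn (hH U) (hL U ++ hA U).
Definition hmax (U : hook) : nat := foldr maxn (hH U) (hL U ++ hA U).

Definition ss_hook (U : hook) : bool :=
  [&& 0 < hH U, sorted ltn (hH U :: hL U) & sorted leq (hH U :: hA U)].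

Definition tableau := nat -> nat -> option hook.

(* la = (la_1 >= la_2 >= ... > 0), la_i = length of row i (row 1 = bottom). *)
Definition is_partition (la : seq nat) : bool :=
  sorted geq la && all (fun n => 0 < n) la.
Definition in_shape (la : seq nat) (r c : nat) : bool :=
  [&& 0 < r, r <= size la, 0 < c & c <= nth 0 la r.-1].

Definition is_HVT (la : seq nat) (T : tableau) : Prop :=
  [/\ is_partition la,
      (forall r c, (T r c != None) = in_shape la r c),
      (forall r c U, T r c = Some U -> ss_hook U),
      (forall r c c' U V, c < c' -> T r c = Some U -> T r c' = Some V ->
          hmax U <= hmin V) &
      (forall r r' c U V, r < r' -> T r c = Some U -> T r' c = Some V ->
          hmax U < hmin V)].

Definition dflt_hook : hook := (0, [::], [::]).
Definition cellT (T : tableau) (r c : nat) : hook := odflt dflt_hook (T r c).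
Definition cells (la : seq nat) : seq (nat * nat) :=
  [seq (r, c) | r <- iota 1 (size la), c <- iota 1 (nth 0 la r.-1)].
Definition arm_cells (la : seq nat) (T : tableau) : seq (nat * nat) :=
  [seq p <- cells la | hA (cellT T p.1 p.2) != [::]].
Definition upd (T : tableau) (r c : nat) (o : option hook) : tableau :=
  fun r' c' => if (r' == r) && (c' == c) then o else T r' c'.
Definition seqmax (s : seq nat) : nat := foldr maxn 0 s.
Definition maxarm (U : hook) : nat := seqmax (hA U).

Definition Vb (la : seq nat) (T : tableau) : seq nat * tableau :=
  let AC := arm_cells la T in
  if AC is [::] then (la, T) else
  let c := seqmax [seq p.2 | p <- AC] in
  let ACc := [seq p <- AC | p.2 == c] in
  let m := seqmax [seq maxarm (cellT T p.1 p.2) | p <- ACc] in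
  let r := seqmax [seq p.1 | p <- ACc & maxarm (cellT T p.1 p.2) == m] in
  let U := cellT T r c in
  let a := last 0 (hA U) in
  let l := last 0 (hL U) in
  let armU := take (size (hA U)).-1 (hA U) in
  let moved := [seq x <- hL U | a < x <= l] in
  let keptL := [seq x <- hL U | ~~ (a < x <= l)] in
  let cand := [seq q <- [seq (r', e) | r' <- [seq r' <- iota 1 (size la)
                                              | in_shape la r' c.+1],
                                        e <- hentries (cellT T r' c.+1)]
               | a <= q.2] in
  if cand is [::] then
    (* new empty cell on top of column c+1, k empty *)
    let rt := (count (fun n => c.+1 <= n) la).+1 in
    let la' := incr_nth la rt.-1 in
    if rt != r then
      (la', upd (upd T r c (Some (hH U, hL U, armU))) rt c.+1 (Some (a, [::], [::])))
    else
      (la', upd (upd T r c (Some (hH U, keptL, armU))) r c.+1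
                 (Some (a, sort leq moved, [::])))
  else
    let vals := [seq q.2 | q <- cand] in
    let k := foldr minn (head 0 vals) vals in
    let rt := (nth (0, 0) cand (index k vals)).1 in
    let old := cellT T rt c.+1 in
    if rt != r then
      let Lp := hH old :: hL old in
      let Lp' := set_nth 0 Lp (index k Lp) a in
      (la, upd (upd T r c (Some (hH U, hL U, armU))) rt c.+1
                (Some (head 0 Lp', behead Lp', rcons (hA old) k)))
    else
      (la, upd (upd T r c (Some (hH U, keptL, armU))) r c.+1
                (Some (a, sort leq (moved ++ hL old), rcons (hA old) k))).

(* Main.v *)
Require Import Defs.
From mathcomp Require Import all_boot zify.
Set Implicit Arguments. Unset Strict Implicit. Unset Printing Implicit Defensive.


Lemma foldr_minn_mem x s : foldr minn x s \in x :: s.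
Proof.
elim: s => [|y s IH] /=; first by rewrite inE.
rewrite /minn; case: ifP => _; first by rewrite !inE eqxx orbT.
move: IH; rewrite !inE => /orP[->|->]; rewrite ?orbT //.
Qed.

Lemma foldr_minn_le x s e : e \in x :: s -> foldr minn x s <= e.
Proof.
elim: s => [|y s IH] /=; first by rewrite inE => /eqP->.
rewrite !inE => /or3P[He|He|He].
- by rewrite geq_min IH ?orbT // inE He.
- by rewrite geq_min (eqP He) leqnn.
- by rewrite geq_min IH ?orbT // inE He orbT.
Qed.

Lemma foldr_maxn_mem x s : foldr maxn x s \in x :: s.
Proof.
elim: s => [|y s IH] /=; first by rewrite inE.
rewrite /maxn; case: ifP => _.
  by move: IH; rewrite !inE => /orP[->|->]; rewrite ?orbT.
by rewrite !inE eqxx orbT.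
Qed.

Lemma foldr_maxn_ge x s e : e \in x :: s -> e <= foldr maxn x s.
Proof.
elim: s => [|y s IH] /=; first by rewrite inE => /eqP->.
rewrite !inE => /or3P[He|He|He].
- by rewrite leq_max IH ?orbT // inE He.
- by rewrite leq_max (eqP He) leqnn.
- by rewrite leq_max IH ?orbT // inE He orbT.
Qed.

Lemma hmin_mem U : hmin U \in hentries U.
Proof. exact: foldr_minn_mem. Qed.
Lemma hmax_mem U : hmax U \in hentries U.
Proof. exact: foldr_maxn_mem. Qed.
Lemma hmin_le U e : e \in hentries U -> hmin U <= e.
Proof. exact: foldr_minn_le. Qed.
Lemma hmax_ge U e : e \in hentries U -> e <= hmax U.
Proof. exact: foldr_maxn_ge. Qed.

Lemma hmin_geP U n : (forall e, e \in hentries U -> n <= e) -> n <= hmin U.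
Proof. by move=> H; apply: H; apply: hmin_mem. Qed.
Lemma hmax_leP U n : (forall e, e \in hentries U -> e <= n) -> hmax U <= n.
Proof. by move=> H; apply: H; apply: hmax_mem. Qed.

Lemma hsub U V : {subset hentries U <= hentries V} -> hmin V <= hmin U /\ hmax U <= hmax V.
Proof.
move=> S; split; [apply: hmin_geP => e /S; apply: hmin_le
  | apply: hmax_leP => e /S; apply: hmax_ge].
Qed.


Lemma seqmax_ge s e : e \in s -> e <= seqmax s.
Proof.
elim: s => [|y s IH] //=; rewrite inE => /orP[/eqP->|He].
  by rewrite leq_max leqnn.
by rewrite leq_max IH ?orbT.
Qed.

Lemma seqmax_mem s : s != [::] -> seqmax s \in s.
Proof.
elim: s => [|y s IH] //= _; rewrite /maxn inE.
case: ifP => H; last by rewrite eqxx.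
case: s IH H => [|z s] IH H; first by rewrite /= in H.
by rewrite IH ?orbT.
Qed.

Lemma path_le_last x s : path leq x s -> forall e, e \in x :: s -> e <= last x s.
Proof.
elim: s x => [|y s IH] x /=; first by move=> _ e; rewrite inE => /eqP->.
move=> /andP[Hxy Hp] e; rewrite inE => /orP[/eqP->|He]; last exact: IH.
apply: leq_trans Hxy _; apply: IH => //; exact: mem_head.
Qed.


Definition relc (p q : nat * nat) (U V : hook) : Prop :=
  (p.1 = q.1 -> p.2 < q.2 -> hmax U <= hmin V) /\
  (p.2 = q.2 -> p.1 < q.1 -> hmax U < hmin V).

Definition T2 (T : tableau) r c U1 rt c2 V1 : tableau :=
  upd (upd T r c (Some U1)) rt c2 (Some V1).

Lemma cellT_some T r c U : T r c = Some U -> cellT T r c = U.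
Proof. by rewrite /cellT => ->. Qed.

Lemma dom_some la T r c : is_HVT la T -> in_shape la r c -> T r c = Some (cellT T r c).
Proof.
move=> [_ Hd _ _ _] Hin; rewrite /cellT; move: (Hd r c); rewrite Hin.
by case: (T r c).
Qed.

Lemma dom_in la T r c U : is_HVT la T -> T r c = Some U -> in_shape la r c.
Proof. by move=> [_ Hd _ _ _] HT; rewrite -Hd HT. Qed.

Lemma master la la' T r c U1 rt V1 :
  is_HVT la T -> is_partition la' ->
  (forall r' c', in_shape la' r' c' = in_shape la r' c' || ((r' == rt) && (c' == c.+1))) ->
  in_shape la r c -> ss_hook U1 -> ss_hook V1 ->
  hmin (cellT T r c) <= hmin U1 -> hmax U1 <= hmax (cellT T r c) ->
  (forall r' c' W, ~~ ((r' == rt) && (c' == c.+1)) ->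
     T2 T r c U1 rt c.+1 V1 r' c' = Some W ->
     relc (r', c') (rt, c.+1) W V1 /\ relc (rt, c.+1) (r', c') V1 W) ->
  is_HVT la' (T2 T r c U1 rt c.+1 V1).
Proof.
move=> HT; have [Hp Hd Hss Hrow Hcol] := HT.
move=> Hp' Hsh Hrc HU1 HV1 Hmin Hmax HV.
have Hother : forall r' c' W, ~~ ((r' == rt) && (c' == c.+1)) ->
    T2 T r c U1 rt c.+1 V1 r' c' = Some W ->
    exists W0, T r' c' = Some W0 /\ hmin W0 <= hmin W /\ hmax W <= hmax W0.
  move=> r' c' W Hn; rewrite /T2 /upd (negbTE Hn).
  case: ifP => [/andP[/eqP-> /eqP->] [<-]|_ ->]; last by exists W.
  by exists (cellT T r c); rewrite (dom_some HT Hrc).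
split => //.
- move=> r' c'; rewrite Hsh /T2 /upd.
  case: ifP => [_|Hn]; first by rewrite orbT.
  rewrite orbF; case: ifP => [/andP[/eqP-> /eqP->]|_]; first by rewrite Hrc.
  exact: Hd.
- move=> r' c' W; rewrite /T2 /upd.
  case: ifP => [_ [<-] //|_]; case: ifP => [_ [<-] //|_]; exact: Hss.
- move=> r' c1 c1' U V Hlt HU HV'.
  case E1: ((r' == rt) && (c1 == c.+1)).
    move: E1 HU => /andP[/eqP Ea /eqP Eb]; subst.
    have Hn : ~~ ((rt == rt) && (c1' == c.+1)).
      by rewrite eqxx /=; apply/eqP => E; move: Hlt; rewrite E ltnn.
    have := HV _ _ _ Hn HV'; rewrite /T2 /upd !eqxx /= => -[_ [H _]] [<-].
    exact: H.
  case E2: ((r' == rt) && (c1' == c.+1)).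
    move: E2 HV' => /andP[/eqP Ea /eqP Eb]; subst.
    have := HV _ _ _ (negbT E1) HU; rewrite /T2 /upd !eqxx /= => -[[H _] _] [<-].
    exact: H.
  have [W0 [HW0 [_ HW0']]] := Hother _ _ _ (negbT E1) HU.
  have [W1 [HW1 [HW1' _]]] := Hother _ _ _ (negbT E2) HV'.
  apply: leq_trans HW0' _; apply: leq_trans HW1'; exact: Hrow HW0 HW1.
- move=> r1 r1' c' U V Hlt HU HV'.
  case E1: ((r1 == rt) && (c' == c.+1)).
    move: E1 HU => /andP[/eqP Ea /eqP Eb]; subst.
    have Hn : ~~ ((r1' == rt) && (c.+1 == c.+1)).
      by rewrite eqxx andbT; apply/eqP => E; move: Hlt; rewrite E ltnn.
    have := HV _ _ _ Hn HV'; rewrite /T2 /upd !eqxx /= => -[_ [_ H]] [<-].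
    exact: H.
  case E2: ((r1' == rt) && (c' == c.+1)).
    move: E2 HV' => /andP[/eqP Ea /eqP Eb]; subst.
    have := HV _ _ _ (negbT E1) HU; rewrite /T2 /upd !eqxx /= => -[[_ H] _] [<-].
    exact: H.
  have [W0 [HW0 [_ HW0']]] := Hother _ _ _ (negbT E1) HU.
  have [W1 [HW1 [HW1' _]]] := Hother _ _ _ (negbT E2) HV'.
  apply: leq_trans HW1'; apply: leq_ltn_trans HW0' _; exact: Hcol HW0 HW1.
Qed.


Lemma geq_trans : transitive geq.
Proof. by move=> a b d h1 h2; apply: leq_trans h2 h1. Qed.

Lemma shape_mono la r c r' c' : is_partition la -> in_shape la r c ->
  0 < r' -> r' <= r -> 0 < c' -> c' <= c -> in_shape la r' c'.
Proof.
move=> /andP[Hs _] /and4P[Hr Hrs Hc Hcn] Hr' Hrr Hc' Hcc.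
apply/and4P; split => //; first exact: leq_trans Hrr Hrs.
apply: leq_trans Hcc _; apply: leq_trans Hcn _.
have := sorted_leq_nth geq_trans (@leqnn) 0 Hs; apply.
- rewrite inE; lia.
- rewrite inE; lia.
- lia.
Qed.

Lemma hmin_le_hmax U : hmin U <= hmax U.
Proof. exact: hmin_le (hmax_mem U). Qed.

Lemma V1_rel la T r c U1 rt V1 a :
 is_HVT la T -> in_shape la r c -> hmin (cellT T r c) <= a ->
 0 < rt -> rt <= r ->
 hmin (cellT T r c) <= hmin U1 -> hmax U1 <= hmax (cellT T r c) ->
 (rt = r -> hmax U1 <= a) ->
 (forall r', r' < rt -> in_shape la r' c.+1 -> hmax (cellT T r' c.+1) < a) ->
 (forall e, e \in hentries V1 -> a <= e \/ (in_shape la rt c.+1 /\ hmin (cellT T rt c.+1) <= e)) ->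
 (in_shape la rt c.+1 -> hmax V1 <= hmax (cellT T rt c.+1)) ->
 (~~ in_shape la rt c.+1 -> (forall r', rt < r' -> ~~ in_shape la r' c.+1) /\
                            (forall c', c.+1 < c' -> ~~ in_shape la rt c')) ->
 forall r' c' W, ~~ ((r' == rt) && (c' == c.+1)) ->
     T2 T r c U1 rt c.+1 V1 r' c' = Some W ->
     relc (r', c') (rt, c.+1) W V1 /\ relc (rt, c.+1) (r', c') V1 W.
Proof.
move=> HT; have [Hp Hd Hss Hrow Hcol] := HT.
move=> Hrc Ha Hrt0 Hrtr Hmin Hmax HU1a Hbelow Hlow Hhigh Hnew r' c' W Hn.
rewrite /T2 /upd (negbTE Hn) => E.
have HUold := dom_some HT Hrc.
have HlowV : forall n, n <= a -> (in_shape la rt c.+1 -> n <= hmin (cellT T rt c.+1)) ->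
    n <= hmin V1.
  move=> n Hna Hno; apply: hmin_geP => e /Hlow [He|[Hi He]]; first exact: leq_trans Hna He.
  exact: leq_trans (Hno Hi) He.
split; split => /=.
- move=> Er Hc; subst r'; apply: HlowV.
  + move: E; case: ifP => [/andP[/eqP Er /eqP Ec] [<-]|Hn2 EW]; first exact: HU1a.
    have Hcc : c' <= c by [].
    case: (ltngtP rt r) => [Hlt|Hgt|Heq].
    * have Hz : in_shape la rt c.
        by apply: (shape_mono Hp Hrc Hrt0 (ltnW Hlt)); case/and4P: Hrc.
      have HZ := dom_some HT Hz.
      have H2 := Hcol _ _ _ _ _ Hlt HZ HUold.
      case: (ltngtP c' c) => [Hc'|Hc'|Hc']; last 2 first.
      - by move: Hcc; rewrite leqNgt Hc'.
      - subst c'; exact: ltnW (leq_trans (Hcol _ _ _ _ _ Hlt EW HUold) Ha).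
      have H1 := Hrow _ _ _ _ _ Hc' EW HZ.
      apply: leq_trans H1 _; apply: leq_trans (hmin_le_hmax _) _.
      exact: ltnW (leq_trans H2 Ha).
    * by move: Hrtr; rewrite leqNgt Hgt.
    * subst rt; have Hc' : c' < c.
        rewrite ltn_neqAle Hcc andbT; apply/eqP => Ec; move: Hn2; by rewrite Ec !eqxx.
      exact: leq_trans (Hrow _ _ _ _ _ Hc' EW HUold) Ha.
  + move=> Hi; have HO := dom_some HT Hi.
    move: E; case: ifP => [/andP[/eqP Er /eqP Ec] [<-]|Hn2 EW].
      subst; apply: leq_trans Hmax _; exact: Hrow _ _ _ _ _ (ltnSn c) HUold HO.
    exact: Hrow _ _ _ _ _ Hc EW HO.
- move=> Ec Hr; subst c'.
  move: E; rewrite (_ : (r' == r) && (c.+1 == c) = false) ?andbF; last first.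
    by apply/negbTE; rewrite negb_and (gtn_eqF (ltnSn c)) orbT.
  move=> EW; have Hi' := dom_in HT EW.
  apply: HlowV; first by rewrite -(cellT_some EW); exact: Hbelow.
  move=> Hi; exact: Hcol _ _ _ _ _ Hr EW (dom_some HT Hi).
- move=> Er Hc; subst r'.
  move: E; rewrite (_ : (rt == r) && (c' == c) = false); last first.
    by apply/negbTE; rewrite negb_and (gtn_eqF (ltnW Hc)) orbT.
  move=> EW; have Hi' := dom_in HT EW.
  case: (boolP (in_shape la rt c.+1)) => Hi.
    apply: leq_trans (Hhigh Hi) _; exact: Hrow _ _ _ _ _ Hc (dom_some HT Hi) EW.
  by have [_ H] := Hnew Hi; move: (H _ Hc); rewrite Hi'.
- move=> Ec Hr; subst c'.
  move: E; rewrite (_ : (r' == r) && (c.+1 == c) = false) ?andbF; last first.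
    by apply/negbTE; rewrite negb_and (gtn_eqF (ltnSn c)) orbT.
  move=> EW; have Hi' := dom_in HT EW.
  case: (boolP (in_shape la rt c.+1)) => Hi.
    apply: leq_ltn_trans (Hhigh Hi) _; exact: Hcol _ _ _ _ _ Hr (dom_some HT Hi) EW.
  by have [H _] := Hnew Hi; move: (H _ Hr); rewrite Hi'.
Qed.


Definition csel la T := seqmax [seq p.2 | p <- arm_cells la T].
Definition rsel la T :=
  let AC := arm_cells la T in
  let c := csel la T in
  let ACc := [seq p <- AC | p.2 == c] in
  let m := seqmax [seq maxarm (cellT T p.1 p.2) | p <- ACc] in
  seqmax [seq p.1 | p <- ACc & maxarm (cellT T p.1 p.2) == m].

Lemma map_neq0 (T1 T2 : eqType) (f : T1 -> T2) (s : seq T1) : s != [::] -> map f s != [::].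
Proof. by case: s. Qed.

Lemma mem_cells la r c : ((r, c) \in cells la) = in_shape la r c.
Proof.
apply/allpairsPdep/idP.
  move=> [r' [c' [Hr Hc [E1 E2]]]]; subst r' c'.
  move: Hr Hc; rewrite !mem_iota /in_shape; lia.
move=> /and4P[H1 H2 H3 H4]; exists r, c; split => //; rewrite mem_iota; lia.
Qed.

Lemma mem_arm_cells la T r c :
  ((r, c) \in arm_cells la T) = in_shape la r c && (hA (cellT T r c) != [::]).
Proof. by rewrite mem_filter mem_cells andbC. Qed.

Lemma sel_spec la T : arm_cells la T != [::] ->
  [/\ in_shape la (rsel la T) (csel la T),
      hA (cellT T (rsel la T) (csel la T)) != [::] &
      forall r', in_shape la r' (csel la T).+1 -> hA (cellT T r' (csel la T).+1) = [::]].
Proof.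
move=> Hne.
have Hc : csel la T \in [seq p.2 | p <- arm_cells la T].
  by apply: seqmax_mem; apply: map_neq0.
set c := csel la T.
have HACc : [seq p <- arm_cells la T | p.2 == c] != [::].
  case/mapP: Hc => p Hp Ep; apply/eqP => E.
  have : p \in [seq p <- arm_cells la T | p.2 == c] by rewrite mem_filter Hp -Ep eqxx.
  by rewrite E.
set ACc := [seq p <- arm_cells la T | p.2 == c] in HACc *.
set m := seqmax [seq maxarm (cellT T p.1 p.2) | p <- ACc].
have Hm : m \in [seq maxarm (cellT T p.1 p.2) | p <- ACc] by apply: seqmax_mem; apply: map_neq0.
have Hr : rsel la T \in [seq p.1 | p <- ACc & maxarm (cellT T p.1 p.2) == m].
  apply: seqmax_mem; apply: map_neq0; case/mapP: Hm => p Hp Ep.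
  apply/eqP => E; have : p \in [seq p <- ACc | maxarm (cellT T p.1 p.2) == m].
    by rewrite mem_filter Hp -Ep eqxx.
  by rewrite E.
case/mapP: Hr => [[r0 c0]]; rewrite mem_filter => /andP[_]; rewrite mem_filter /= => /andP[/eqP Ec0 Hp] Er.
have Hp' := Hp; rewrite Ec0 -Er mem_arm_cells in Hp'; case/andP: Hp' => H1 H2.
split => // r' Hi; apply/eqP; apply: contraT => Hne'.
have : (r', c.+1) \in arm_cells la T by rewrite mem_arm_cells Hi.
move=> Hin; have := seqmax_ge (map_f (fun p => p.2) Hin); rewrite /= -/c.
by rewrite ltnn.
Qed.


Lemma hentriesE x L A : hentries (x, L, A) = x :: L ++ A.
Proof. by []. Qed.

Lemma uniq_of_ltn s : sorted ltn s -> uniq s.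
Proof. by rewrite ltn_sorted_uniq_leq => /andP[]. Qed.

Lemma sorted_cons_ltn x s : sorted ltn (x :: s) = all (ltn x) s && sorted ltn s.
Proof. by rewrite /= path_sortedE //; exact: ltn_trans. Qed.
Lemma sorted_cons_leq x s : sorted leq (x :: s) = all (leq x) s && sorted leq s.
Proof. by rewrite /= path_sortedE //; exact: leq_trans. Qed.

Lemma le_lastL x L e : path ltn x L -> e \in L -> e <= last 0 L.
Proof.
case: L => // y L /= /andP[_ HL] HeL.
apply: path_le_last HeL; by apply: (sub_path _ HL) => u v /ltnW.
Qed.

Lemma hookU x L armU a : ss_hook (x, L, rcons armU a) ->
  [/\ ss_hook (x, L, armU),
      ss_hook (x, [seq y <- L | ~~ (a < y <= last 0 L)], armU),
      hmax (x, [seq y <- L | ~~ (a < y <= last 0 L)], armU) <= a, x <= a & 0 < x].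
Proof.
move=> H; rewrite /ss_hook /hH /hL /hA /= in H *; case/and3P: H => Hx HL HA.
have : path leq x armU && (last x armU <= a) by rewrite -rcons_path.
case/andP => HA1 HA2.
have Hxa : x <= a by have := path_le_last HA (mem_head x _); rewrite last_rcons.
have HLf : path ltn x [seq y <- L | ~~ (a < y <= last 0 L)].
  have HL' : sorted ltn (x :: L) by [].
  have := sorted_filter ltn_trans (fun y => (y == x) || ~~ (a < y <= last 0 L)) HL'.
  rewrite /= eqxx /=; congr (path _ _ _); apply: eq_in_filter => y Hy.
  by rewrite (gtn_eqF (allP (order_path_min ltn_trans HL) _ Hy)).
split => //; rewrite ?Hx ?HLf ?HA1 ?HL //.
apply: hmax_leP => e; rewrite hentriesE inE mem_cat => /or3P[/eqP->//|He|He].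
- move: He; rewrite mem_filter negb_and -leqNgt => /andP[/orP[//|Hle] HeL].
  have Hel := le_lastL HL HeL.
  by rewrite Hel in Hle.
- by apply: leq_trans (path_le_last HA1 _) HA2; rewrite inE He orbT.
Qed.


Definition candl la T c a : seq (nat * nat) :=
  [seq q <- [seq (r', e) | r' <- [seq r' <- iota 1 (size la) | in_shape la r' c.+1],
                           e <- hentries (cellT T r' c.+1)] | a <= q.2].

Definition step_new (la : seq nat) (T : tableau) (r c : nat) (U : hook) a moved keptL armU :=
    let rt := (count (fun n => c.+1 <= n) la).+1 in
    let la' := incr_nth la rt.-1 in
    if rt != r then
      (la', upd (upd T r c (Some (hH U, hL U, armU))) rt c.+1 (Some (a, [::], [::])))
    else
      (la', upd (upd T r c (Some (hH U, keptL, armU))) r c.+1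
                 (Some (a, sort leq moved, [::]))).

Definition step_old (la : seq nat) (T : tableau) (r c : nat) (U : hook) (a : nat) (moved keptL armU : seq nat) (cand : seq (nat * nat)) :=
    let vals := [seq q.2 | q <- cand] in
    let k := foldr minn (head 0 vals) vals in
    let rt := (nth (0, 0) cand (index k vals)).1 in
    let old := cellT T rt c.+1 in
    if rt != r then
      let Lp := hH old :: hL old in
      let Lp' := set_nth 0 Lp (index k Lp) a in
      (la, upd (upd T r c (Some (hH U, hL U, armU))) rt c.+1
                (Some (head 0 Lp', behead Lp', rcons (hA old) k)))
    else
      (la, upd (upd T r c (Some (hH U, keptL, armU))) r c.+1
                (Some (a, sort leq (moved ++ hL old), rcons (hA old) k))).

Definition step (la : seq nat) (T : tableau) (r c : nat) : seq nat * tableau :=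
  let U := cellT T r c in
  let a := last 0 (hA U) in
  let l := last 0 (hL U) in
  let armU := take (size (hA U)).-1 (hA U) in
  let moved := [seq x <- hL U | a < x <= l] in
  let keptL := [seq x <- hL U | ~~ (a < x <= l)] in
  let cand := candl la T c a in
  if cand is [::] then step_new la T r c U a moved keptL armU
  else step_old la T r c U a moved keptL armU cand.

Lemma Vb_eq la T : arm_cells la T != [::] -> Vb la T = step la T (rsel la T) (csel la T).
Proof. by rewrite /Vb /step /rsel /csel /candl; case: (arm_cells la T). Qed.


Lemma mem_candl la T c a r' e :
  ((r', e) \in candl la T c a) =
  [&& a <= e, in_shape la r' c.+1 & e \in hentries (cellT T r' c.+1)].
Proof.
rewrite /candl mem_filter; congr (_ && _).
apply/allpairsPdep/idP.
  move=> [r1 [e1 [Hr He [E1 E2]]]]; subst r1 e1.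
  by move: Hr; rewrite mem_filter => /andP[-> _].
move=> /andP[Hi He]; exists r', e; split => //.
rewrite mem_filter Hi mem_iota; case/and4P: Hi; lia.
Qed.

Lemma count_nth s m i : sorted geq s -> 0 < m ->
  (m <= nth 0 s i) = (i < count (fun n => m <= n) s).
Proof.
elim: s i => [|y s IH] i Hs Hm /=; first by rewrite nth_nil; case: m Hm.
have Hs' : sorted geq s := path_sorted Hs.
have Hall : all (geq y) s := order_path_min geq_trans Hs.
case: (leqP m y) => Hmy.
  by case: i => [|i] //=; rewrite add1n ltnS IH.
have Hc : count (fun n => m <= n) s = 0.
  apply/eqP; rewrite -leqn0 leqNgt -has_count; apply/hasP => -[z Hz Hmz].
  have := allP Hall z Hz; rewrite /= => Hzy.
  by move: (leq_trans Hmz Hzy); rewrite leqNgt Hmy.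
rewrite Hc; case: i => [|i] /=; first by rewrite leqNgt Hmy.
case: (ltnP i (size s)) => Hi.
  have := allP Hall _ (mem_nth 0 Hi); rewrite /= => Hzy.
  apply/negbTE; rewrite -ltnNge; exact: leq_ltn_trans Hzy Hmy.
by rewrite nth_default //; apply/negbTE; rewrite -ltnNge.
Qed.

Lemma partition_incr la h c : is_partition la -> h < size la -> nth 0 la h = c ->
  (0 < h -> c.+1 <= nth 0 la h.-1) -> is_partition (incr_nth la h).
Proof.
move=> /andP[Hs Hpos] Hh Hc Hprev; apply/andP; split.
  apply/(sortedP 0) => i; rewrite size_incr_nth Hh !nth_incr_nth => Hi.
  have := (sortedP 0 Hs) i Hi; rewrite /= => Hle.
  case: (eqVneq h i.+1) => [E|E].
    subst h; have := Hprev isT; rewrite (gtn_eqF (ltnSn i)) /= Hc; lia.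
  apply: leq_trans Hle _; exact: leq_addl.
apply/(all_nthP 0) => i; rewrite size_incr_nth Hh nth_incr_nth => Hi.
by have := (all_nthP 0 Hpos) i Hi; rewrite /=; lia.
Qed.


Lemma sort_ltn a M : uniq M -> all (ltn a) M -> sorted ltn (a :: sort leq M).
Proof.
move=> Hu Ha; rewrite sorted_cons_ltn ltn_sorted_uniq_leq sort_uniq Hu sort_sorted ?andbT.
  by apply/allP => e; rewrite mem_sort => /(allP Ha).
exact: leq_total.
Qed.

Lemma sub_hook x L A L' A' : {subset L' <= L} -> {subset A' <= A} ->
  {subset hentries (x, L', A') <= hentries (x, L, A)}.
Proof.
move=> HL HA e; rewrite !hentriesE !inE !mem_cat => /or3P[->|/HL->|/HA->]; by rewrite ?orbT.
Qed.

Lemma sub_rcons (s : seq nat) y : {subset s <= rcons s y}.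
Proof. by move=> e He; rewrite mem_rcons inE He orbT. Qed.

Lemma new_ok la T r c x L armU a :
  is_HVT la T -> in_shape la r c -> cellT T r c = (x, L, rcons armU a) ->
  candl la T c a = [::] ->
  is_HVT (step_new la T r c (x, L, rcons armU a) a
            [seq y <- L | a < y <= last 0 L] [seq y <- L | ~~ (a < y <= last 0 L)] armU).1
         (step_new la T r c (x, L, rcons armU a) a
            [seq y <- L | a < y <= last 0 L] [seq y <- L | ~~ (a < y <= last 0 L)] armU).2.
Proof.
move=> HT Hrc EU Ec; have [Hp Hd Hss Hrow Hcol] := HT.
have Hs : sorted geq la by case/andP: Hp.
have HUss : ss_hook (x, L, rcons armU a) by rewrite -EU; apply: Hss (dom_some HT Hrc).
have [Hs1 Hs2 Hkept Hxa Hx] := hookU HUss.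
have Ha_in : a \in hentries (cellT T r c).
  by rewrite EU hentriesE inE mem_cat mem_rcons mem_head !orbT.
have HminU : hmin (cellT T r c) <= a := hmin_le Ha_in.
have Hbel : forall r' e, in_shape la r' c.+1 -> e \in hentries (cellT T r' c.+1) -> e < a.
  move=> r' e Hi He; rewrite ltnNge; apply/negP => Hae.
  have : (r', e) \in candl la T c a by rewrite mem_candl Hae Hi He.
  by rewrite Ec.
have Hbelmax : forall r', in_shape la r' c.+1 -> hmax (cellT T r' c.+1) < a.
  by move=> r' Hi; apply: Hbel Hi (hmax_mem _).
have Hhs := count_size (fun n => c.+1 <= n) la.
set h := count (fun n => c.+1 <= n) la in Hhs *.
have Hcnt : forall r', 0 < r' -> in_shape la r' c.+1 = (r' <= h).
  move=> r' Hr'; rewrite /in_shape (count_nth _ Hs) // -/h; lia.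
have Hr0 : 0 < r by case/and4P: Hrc.
have Hc0 : 0 < c by case/and4P: Hrc.
have Hhr : h < r.
  rewrite ltnNge; apply/negP => Hrh.
  have Hi : in_shape la r c.+1 by rewrite Hcnt.
  have H1 := Hrow _ _ _ _ _ (ltnSn c) (dom_some HT Hrc) (dom_some HT Hi).
  have H2 := Hbel _ _ Hi (hmin_mem _).
  have H3 := hmax_ge Ha_in.
  lia.
have Hsz : h < size la by case/and4P: Hrc; lia.
have Hrtc : in_shape la h.+1 c := shape_mono Hp Hrc (ltn0Sn h) Hhr Hc0 (leqnn c).
have Hnth : nth 0 la h = c.
  have H1 : c <= nth 0 la h by case/and4P: Hrtc.
  have H2 : ~~ (c.+1 <= nth 0 la h) by rewrite (count_nth _ Hs) // -/h ltnn.
  lia.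
have Hprev : 0 < h -> c.+1 <= nth 0 la h.-1.
  by move=> H; rewrite (count_nth _ Hs) // -/h; lia.
have Hp' := partition_incr Hp Hsz Hnth Hprev.
have Hsh : forall r' c', in_shape (incr_nth la h) r' c' =
                         in_shape la r' c' || ((r' == h.+1) && (c' == c.+1)).
  move=> r' c'; rewrite /in_shape size_incr_nth Hsz nth_incr_nth.
  case: (eqVneq r' h.+1) => [->|Hne] /=; first by rewrite eqxx Hnth; lia.
  rewrite orbF; case: r' Hne => //= r' Hne.
  by rewrite (_ : (h == r') = false) //; apply/negbTE; apply: contra Hne => /eqP->.
have Hnew : ~~ in_shape la h.+1 c.+1 ->
   (forall r', h.+1 < r' -> ~~ in_shape la r' c.+1) /\
   (forall c', c.+1 < c' -> ~~ in_shape la h.+1 c').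
  move=> _; split => [r' Hr'|c' Hc']; first by rewrite Hcnt; lia.
  by rewrite /in_shape /= Hnth; lia.
have Hnot : in_shape la h.+1 c.+1 = false by rewrite Hcnt //; lia.
have HU1 : {subset hentries (x, [seq y <- L | ~~ (a < y <= last 0 L)], armU) <=
             hentries (cellT T r c)}.
  by rewrite EU; apply: sub_hook; [exact: mem_subseq (filter_subseq _ _)| exact: sub_rcons].
have HU1' : {subset hentries (x, L, armU) <= hentries (cellT T r c)}.
  by rewrite EU; apply: sub_hook; [by []| exact: sub_rcons].
have [Hm1 Hm2] := hsub HU1.
have [Hm1' Hm2'] := hsub HU1'.
have HuL : uniq L by move: Hs1; rewrite /ss_hook /= => /and3P[_ /path_sorted/uniq_of_ltn ->].
rewrite /step_new /= -/h.
case: eqVneq => [E|Hne] /=.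
- subst r.
  apply: (master HT Hp' Hsh Hrc Hs2) => //.
  + rewrite /ss_hook /hH /hL /hA (leq_trans Hx Hxa) /= andbT.
    have := @sort_ltn a [seq y <- L | a < y <= last 0 L] (filter_uniq _ HuL).
    apply. by apply/allP => e; rewrite mem_filter => /andP[/andP[]].
  + apply: (V1_rel HT Hrc HminU) => //.
    * by move=> r' Hr' Hi; apply: Hbelmax.
    * move=> e; rewrite hentriesE inE cats0 mem_sort mem_filter => /orP[/eqP->|/andP[/andP[H _] _]].
        by left.
      by left; apply: ltnW.
    * by rewrite Hnot.
- apply: (master HT Hp' Hsh Hrc Hs1) => //.
  + by rewrite /ss_hook /hH /hL /hA /= !andbT; exact: leq_trans Hx Hxa.
  + apply: (V1_rel HT Hrc HminU) => //.
    * by move=> E; move: Hne; rewrite E eqxx.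
    * by move=> r' Hr' Hi; apply: Hbelmax.
    * by move=> e; rewrite hentriesE inE => /eqP->; left.
    * by rewrite Hnot.
Qed.


Lemma set_nth_cat0 (p1 p2 : seq nat) k a : set_nth 0 (p1 ++ k :: p2) (size p1) a = p1 ++ a :: p2.
Proof. by elim: p1 => //= u p1 ->. Qed.

Lemma caseA_hook s a k : sorted ltn s -> all (leq 1) s -> k \in s -> a <= k -> 0 < a ->
  (forall e, e \in s -> e < k -> e < a) ->
  let s' := set_nth 0 s (index k s) a in
  ss_hook (head 0 s', behead s', [:: k]) /\
  (forall e, e \in hentries (head 0 s', behead s', [:: k]) -> e = a \/ e \in s).
Proof.
move=> Hs Hpos Hk Hak Ha Hmin.
case/splitPr: Hk Hs Hpos Hmin => p1 p2 Hs Hpos Hmin s'.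
have := Hs; rewrite sorted_pairwise; last exact: ltn_trans.
rewrite pairwise_cat /= => /and4P[Hal Hpw1 Hk2 Hpw2].
have Hp1k : forall u, u \in p1 -> u < k.
  by move=> u Hu; have := allrelP Hal u k Hu (mem_head _ _).
have Hp1 : forall u, u \in p1 -> u < a.
  by move=> u Hu; apply: Hmin (Hp1k _ Hu); rewrite mem_cat Hu.
have Hknp1 : k \notin p1 by apply/negP => /Hp1k; rewrite ltnn.
have Es' : s' = p1 ++ a :: p2.
  by rewrite /s' index_cat (negbTE Hknp1) /= eqxx addn0 set_nth_cat0.
rewrite {}/s' in Es' *; rewrite Es'.
set t := p1 ++ a :: p2.
have Et : head 0 t :: behead t = t by rewrite /t; case: (p1).
have Hst : sorted ltn t.
  rewrite sorted_pairwise; last exact: ltn_trans.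
  rewrite pairwise_cat /= Hpw1 Hpw2 !andbT; apply/andP; split.
    apply/allrelP => u v Hu; rewrite inE => /orP[/eqP->|Hv]; first exact: Hp1.
    apply: (ltn_trans (Hp1 _ Hu)); apply: (leq_ltn_trans Hak); exact: (allP Hk2).
  apply/allP => v Hv; apply: (leq_ltn_trans Hak); exact: (allP Hk2).
have Hpost : forall e, e \in t -> 0 < e.
  move=> e; rewrite mem_cat inE => /or3P[He|/eqP->//|He]; apply: (allP Hpos);
  by rewrite mem_cat ?He ?inE ?He ?orbT.
split.
- rewrite /ss_hook /hH /hL /hA /=; apply/and3P; split.
  + by apply: Hpost; rewrite -Et mem_head.
  + by have : sorted ltn (head 0 t :: behead t) by rewrite Et.
  + rewrite andbT; rewrite /t; case: (p1) Hp1 => [|u p1'] Hp1' /=; first exact: Hak.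
    by apply: ltnW; apply: (leq_trans (Hp1' _ (mem_head _ _))).
- move=> e; rewrite hentriesE -cat_cons Et mem_cat /t mem_cat !inE.
  rewrite -!orbA; move=> /or4P[He|/eqP->|He|/eqP->]; [right|by left|right|right];
  by rewrite mem_cat ?He ?inE ?eqxx ?He ?orbT.
Qed.

Lemma old_ok la T r c x L armU a q0 cand0 :
  is_HVT la T -> in_shape la r c -> cellT T r c = (x, L, rcons armU a) ->
  (forall r', in_shape la r' c.+1 -> hA (cellT T r' c.+1) = [::]) ->
  candl la T c a = q0 :: cand0 ->
  is_HVT (step_old la T r c (x, L, rcons armU a) a
            [seq y <- L | a < y <= last 0 L] [seq y <- L | ~~ (a < y <= last 0 L)] armU
            (q0 :: cand0)).1
         (step_old la T r c (x, L, rcons armU a) a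
            [seq y <- L | a < y <= last 0 L] [seq y <- L | ~~ (a < y <= last 0 L)] armU
            (q0 :: cand0)).2.
Proof.
move=> HT Hrc EU Hnoarm Ec; have [Hp Hd Hss Hrow Hcol] := HT.
have Hs : sorted geq la by case/andP: Hp.
have HUss : ss_hook (x, L, rcons armU a) by rewrite -EU; apply: Hss (dom_some HT Hrc).
have [Hs1 Hs2 Hkept Hxa Hx] := hookU HUss.
have Ha_in : a \in hentries (cellT T r c).
  by rewrite EU hentriesE inE mem_cat mem_rcons mem_head !orbT.
have HminU : hmin (cellT T r c) <= a := hmin_le Ha_in.
have HmaxU : a <= hmax (cellT T r c) := hmax_ge Ha_in.
have HU1 : {subset hentries (x, [seq y <- L | ~~ (a < y <= last 0 L)], armU) <=
             hentries (cellT T r c)}.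
  by rewrite EU; apply: sub_hook; [exact: mem_subseq (filter_subseq _ _)| exact: sub_rcons].
have HU1' : {subset hentries (x, L, armU) <= hentries (cellT T r c)}.
  by rewrite EU; apply: sub_hook; [by []| exact: sub_rcons].
have [Hm1 Hm2] := hsub HU1.
have [Hm1' Hm2'] := hsub HU1'.
have HuL : uniq L by move: Hs1; rewrite /ss_hook /= => /and3P[_ /path_sorted/uniq_of_ltn ->].
rewrite -Ec /step_old; cbv zeta.
set vals := [seq q.2 | q <- candl la T c a].
set k := foldr minn (head 0 vals) vals.
set rt := (nth (0, 0) (candl la T c a) (index k vals)).1.
have Hvne : vals != [::] by rewrite /vals Ec.
have Hk_in : k \in vals.
  have := foldr_minn_mem (head 0 vals) vals; rewrite -/k inE => /orP[/eqP->|//].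
  by case: (vals) Hvne => // v w _; rewrite mem_head.
have Hk_min : forall v, v \in vals -> k <= v.
  by move=> v Hv; apply: foldr_minn_le; rewrite inE Hv orbT.
have Hi : index k vals < size (candl la T c a).
  by rewrite -(size_map (fun q => q.2)) index_mem.
have Hnth : nth (0,0) (candl la T c a) (index k vals) = (rt, k).
  have E2 : (nth (0,0) (candl la T c a) (index k vals)).2 = k.
    by rewrite -(nth_map (0,0) 0 (fun q => q.2)) // nth_index.
  by rewrite /rt; move: E2; case: (nth _ _ _) => ? ? /= ->.
have Hq : (rt, k) \in candl la T c a by rewrite -Hnth mem_nth.
move: Hq; rewrite mem_candl => /and3P[Hak Hrtin Hkold].
have Hmin_k : forall r' e, in_shape la r' c.+1 -> e \in hentries (cellT T r' c.+1) ->
    a <= e -> k <= e.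
  move=> r' e Hi' He Hae; apply: Hk_min; apply/mapP; exists (r', e) => //.
  by rewrite mem_candl Hae Hi' He.
have Hrt0 : 0 < rt by case/and4P: Hrtin.
have HO := dom_some HT Hrtin.
have Hkmin_old : hmin (cellT T rt c.+1) <= k := hmin_le Hkold.
have Hkmax_old : k <= hmax (cellT T rt c.+1) := hmax_ge Hkold.
have Hrtr : rt <= r.
  rewrite leqNgt; apply/negP => Hlt.
  have Hr0 : 0 < r by case/and4P: Hrc.
  have Hi' : in_shape la r c.+1 := shape_mono Hp Hrtin Hr0 (ltnW Hlt) (ltn0Sn c) (leqnn _).
  have H1 := Hrow _ _ _ _ _ (ltnSn c) (dom_some HT Hrc) (dom_some HT Hi').
  have H2 := Hmin_k _ _ Hi' (hmin_mem _) (leq_trans HmaxU H1).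
  have H3 := Hcol _ _ _ _ _ Hlt (dom_some HT Hi') HO.
  have H4 := hmin_le_hmax (cellT T r c.+1).
  clear -H2 H3 H4 Hkmin_old; lia.
have Hbelmax : forall r', r' < rt -> in_shape la r' c.+1 -> hmax (cellT T r' c.+1) < a.
  move=> r' Hlt Hi'; rewrite ltnNge; apply/negP => Hae.
  have H2 := Hmin_k _ _ Hi' (hmax_mem _) Hae.
  have H3 := Hcol _ _ _ _ _ Hlt (dom_some HT Hi') HO.
  clear -H2 H3 Hkmin_old; lia.
have HAo := Hnoarm _ Hrtin.
have Hssold : ss_hook (cellT T rt c.+1) := Hss _ _ _ HO.
have Hsh : forall r' c', in_shape la r' c' =
                         in_shape la r' c' || ((r' == rt) && (c' == c.+1)).
  move=> r' c'; case: (boolP ((r' == rt) && (c' == c.+1))) => [/andP[/eqP-> /eqP->]|];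
  by rewrite ?orbT ?orbF.
have Ha0 : 0 < a by apply: leq_trans Hx Hxa.
move: Hmin_k; rewrite -/rt => Hmin_k.
have Hmin_ko : forall e, e \in hentries (cellT T rt c.+1) -> a <= e -> k <= e.
  by move=> e He; apply: Hmin_k Hrtin He.
have HV1low := fun e (He : e \in hentries (cellT T rt c.+1)) => hmin_le He.
have HV1high := fun e (He : e \in hentries (cellT T rt c.+1)) => hmax_ge He.
case Eold: (cellT T rt c.+1) HAo Hssold Hkold Hmin_ko HV1low HV1high Hkmax_old
  => [[xo Lo] Ao] /= HAo Hssold Hkold Hmin_ko HV1low HV1high Hkmax_old.
subst Ao.
move: Hssold; rewrite /ss_hook /= andbT => /andP[Hxo HLo].
have HLo_gt : all (ltn xo) Lo := order_path_min ltn_trans HLo.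
rewrite /hH /hL /hA /=.
case: eqVneq => [E|Hne'] /=.
- have HUold : hmax (cellT T r c) <= hmin (xo, Lo, [::]).
    by rewrite -Eold E; apply: Hrow _ _ _ _ _ (ltnSn c) (dom_some HT Hrc) _; rewrite -E.
  have Hxo_ge : hmin (xo, Lo, [::]) <= xo by apply: hmin_le; rewrite mem_head.
  have HLo_a : forall e, e \in Lo -> a < e.
    move=> e He; have := allP HLo_gt e He; rewrite /= => H.
    clear -H HmaxU HUold Hxo_ge; lia.
  have Hmv : forall e, e \in [seq y <- L | a < y & y <= last 0 L] -> e <= hmax (cellT T r c).
    move=> e; rewrite mem_filter => /andP[_ He]; apply: hmax_ge.
    by rewrite EU hentriesE inE mem_cat He orbT.
  move: Hsh; rewrite E => Hsh.
  apply: (master HT Hp Hsh Hrc Hs2) => //.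
  + rewrite /ss_hook /hH /hL /hA /= Ha0 Hak !andbT /=.
    have := @sort_ltn a ([seq y <- L | a < y & y <= last 0 L] ++ Lo); apply.
      rewrite cat_uniq filter_uniq //= (uniq_of_ltn (path_sorted HLo)) andbT.
      apply/hasPn => e HeLo; apply/negP => Hem.
      have := Hmv _ Hem; have := allP HLo_gt e HeLo; rewrite /= => H1 H2.
      clear -H1 H2 HUold Hxo_ge; lia.
    apply/allP => e; rewrite mem_cat => /orP[|/HLo_a //].
    by rewrite mem_filter => /andP[/andP[]].
  + apply: (V1_rel HT Hrc HminU) => //.
    * by rewrite -E.
    * by move=> r' Hr' Hi'; apply: Hbelmax; rewrite ?E.
    * move=> e; rewrite hentriesE inE mem_cat mem_sort mem_cat inE.
      rewrite -!orbA; move=> /or4P[/eqP->|He|He|/eqP->]; left => //.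
      - by move: He; rewrite mem_filter => /andP[/andP[/ltnW]].
      - exact: ltnW (HLo_a _ He).
    * move=> _; rewrite -E Eold; apply: hmax_leP => e.
      rewrite hentriesE inE mem_cat mem_sort mem_cat inE.
      rewrite -!orbA; move=> /or4P[/eqP->|He|He|/eqP->]; last exact: Hkmax_old.
      - exact: leq_trans Hak Hkmax_old.
      - apply: leq_trans (Hmv _ He) _; apply: leq_trans HUold _; exact: hmin_le_hmax.
      - by apply: HV1high; rewrite inE mem_cat He orbT.
    * by rewrite -E Hrtin.
- have Hsl : sorted ltn (xo :: Lo) by [].
  have Hpos : all (leq 1) (xo :: Lo).
    rewrite /= Hxo /=; apply/allP => e He; have := allP HLo_gt e He; rewrite /= => H.
    clear -H Hxo; lia.
  have Hkin : k \in xo :: Lo by move: Hkold; rewrite hentriesE cats0.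
  have Hminc : forall e, e \in xo :: Lo -> e < k -> e < a.
    move=> e He Hek; rewrite ltnNge; apply/negP => Hae.
    have := Hmin_ko e; rewrite hentriesE cats0 => /(_ He Hae) H.
    clear -H Hek; lia.
  have [HssV HeV] := caseA_hook Hsl Hpos Hkin Hak Ha0 Hminc.
  apply: (master HT Hp Hsh Hrc Hs1) => //.
  apply: (V1_rel HT Hrc HminU) => //.
  * by move=> E; move: Hne'; rewrite E eqxx.
  * move=> e /HeV [->|He]; first by left.
    by right; split => //; rewrite Eold; apply: HV1low; rewrite hentriesE cats0.
  * move=> _; rewrite Eold; apply: hmax_leP => e /HeV [->|He].
      exact: leq_trans Hak Hkmax_old.
    by apply: HV1high; rewrite hentriesE cats0.
  * by rewrite Hrtin.
Qed.


Lemma step_ok la T r c : is_HVT la T -> in_shape la r c -> hA (cellT T r c) != [::] ->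
  (forall r', in_shape la r' c.+1 -> hA (cellT T r' c.+1) = [::]) ->
  is_HVT (step la T r c).1 (step la T r c).2.
Proof.
move=> HT Hrc HA Hna.
case EU: (cellT T r c) HA => [[x L] A] /= HA.
case/lastP: A EU HA => [//|armU a] EU _.
have Et : take (size (rcons armU a)).-1 (rcons armU a) = armU.
  by rewrite size_rcons /= -cats1 take_size_cat.
rewrite /step EU /hA /hL /= Et last_rcons.
case Ec: (candl la T c a) => [|q0 cand0].
  exact: new_ok.
exact: old_ok.
Qed.

Theorem lemma3p3 (la : seq nat) (T : tableau) :
  is_HVT la T -> is_HVT (Vb la T).1 (Vb la T).2.
Proof.
move=> HT; case: (eqVneq (arm_cells la T) [::]) => [E|Hne].
  by rewrite /Vb E.
rewrite (Vb_eq Hne); have [H1 H2 H3] := sel_spec Hne; exact: step_ok.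
Qed.
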